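(* $\left\|\begin{bmatrix}0&0&0&1\\0&1&1&1\\0&1&0&0\\1&1&0&0\end{bmatrix}\right\|_\bullet>\left\|\begin{bmatrix}1&1&0&0\\0&1&1&0\\0&0&1&1\\0&0&0&1\end{bmatrix}\right\|_\bullet$.
   Context: Fix $\mathbb F\in\{\mathbb R,\mathbb C\}$. For an $m\times n$ matrix $A$, the Schur norm is $\|A\|_\bullet=\sup\{\|A\bullet X\|: X\in M_{m,n}(\mathbb F),\ \|X\|\le1\}$, where $A\bullet X=[a_{ij}x_{ij}]$ is the entrywise product and $\|\cdot\|$ is the operator norm $\ell^2_n\to\ell^2_m$. *)

(* Defs.v *)
From HB Require Import structures.
From mathcomp Require Import all_boot all_order all_algebra.
From mathcomp Require Import classical_sets reals.
From mathcomp Require Import complex.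
Set Implicit Arguments. Unset Strict Implicit. Unset Printing Implicit Defensive.
Import Order.TTheory GRing.Theory Num.Theory.
Local Open Scope ring_scope.
Local Open Scope classical_set_scope.

(* The scalar field F is a ring K together with its absolute value
   abs : K -> R (R a real field): F = R with abs = `|.|, or F = R[i] with
   abs = normc (the complex modulus). *)

Definition vnorm (R : realType) (K : pzRingType) (abs : K -> R) (n : nat)
  (v : 'cV[K]_n) : R :=
  Num.sqrt (\sum_(i < n) abs (v i ord0) ^+ 2).

Definition opnorm (R : realType) (K : pzRingType) (abs : K -> R) (m n : nat)
  (X : 'M[K]_(m, n)) : R :=
  sup [set r : R | exists v : 'cV[K]_n, vnorm abs v <= 1 /\ r = vnorm abs (X *m v)].

Definition schur_mul (K : pzRingType) (m n : nat) (A X : 'M[K]_(m, n)) : 'M[K]_(m, n) :=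
  \matrix_(i, j) (A i j * X i j).

Definition schur_norm (R : realType) (K : pzRingType) (abs : K -> R) (m n : nat)
  (A : 'M[K]_(m, n)) : R :=
  sup [set r : R | exists X : 'M[K]_(m, n),
         opnorm abs X <= 1 /\ r = opnorm abs (schur_mul A X)].

Definition matA (K : pzRingType) : 'M[K]_4 :=
  \matrix_(i < 4, j < 4)
    (nth 0%N (nth [::] [:: [:: 0; 0; 0; 1]; [:: 0; 1; 1; 1];
                           [:: 0; 1; 0; 0]; [:: 1; 1; 0; 0]]%N i) j)%:R.

Definition matB (K : pzRingType) : 'M[K]_4 :=
  \matrix_(i < 4, j < 4)
    (nth 0%N (nth [::] [:: [:: 1; 1; 0; 0]; [:: 0; 1; 1; 0];
                           [:: 0; 0; 1; 1]; [:: 0; 0; 0; 1]]%N i) j)%:R.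

(* Main.v *)
Require Import Defs.
From HB Require Import structures.
From mathcomp Require Import all_boot all_order all_algebra.
From mathcomp Require Import classical_sets reals.
From mathcomp Require Import complex.
From mathcomp Require Import ring lra.
Import Order.TTheory GRing.Theory Num.Theory.
Local Open Scope ring_scope.
Local Open Scope classical_set_scope.
Set Implicit Arguments. Unset Strict Implicit. Unset Printing Implicit Defensive.

Lemma CS (R : realType) k (a b : 'I_k -> R) :
  (\sum_l a l * b l) ^+ 2 <= (\sum_l a l ^+ 2) * (\sum_l b l ^+ 2).
Proof.
set A := \sum_l a l ^+ 2; set B := \sum_l b l ^+ 2; set C := \sum_l a l * b l.
have E : forall p q, \sum_l (p * b l + q * a l) ^+ 2 = p^+2 * B + 2%:R * p * q * C + q ^+ 2 * A.
  move=> p q.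
  transitivity (\sum_l (p^+2 * b l ^+ 2 + 2%:R * p * q * (a l * b l) + q^+2 * a l ^+ 2)).
    by apply: eq_bigr => l _; ring.
  by rewrite !big_split /= -!mulr_sumr.
have H := E A (- C).
have H0 : 0 <= \sum_l (A * b l + - C * a l) ^+ 2 by apply: sumr_ge0 => l _; apply: sqr_ge0.
rewrite H in H0.
have A0 : 0 <= A by apply: sumr_ge0 => l _; apply: sqr_ge0.
have [Ap|Az] := ltrP 0 A.
  have : 0 <= A * (A * B - C ^+ 2) by move: H0; congr (_ <= _); ring.
  by rewrite pmulr_rge0 // subr_ge0.
have A00 : A = 0 by apply/eqP; rewrite eq_le Az A0.
have az : forall l, a l = 0.
  move=> l; apply/eqP; rewrite -sqrf_eq0; apply/eqP.
  by apply: (psumr_eq0P (P := xpredT)) A00 l _ => // l' _; apply: sqr_ge0.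
have -> : C = 0 by rewrite /C big1 // => l _; rewrite az mul0r.
by rewrite A00 expr0n /= mul0r.
Qed.

Lemma nK (R : realType) (r : R) : `|r| ^+ 2 = r ^+ 2.
Proof. exact: real_normK (num_real r). Qed.

Definition nsqR (R : realType) n (u : 'cV[R]_n) := \sum_i u i ord0 ^+ 2.

Definition Nm (R : realType) : 'M[R]_4 :=
  \matrix_(i < 4, j < 4)
    (nth 0%Z (nth [::] [:: [:: 0; -2; 6; 10]; [:: 2; 6; -8; 6];
                           [:: 6; 8; 6; -2]; [:: -10; 6; 2; 0]]%Z i) j)%:~R.

Lemma N_orth (R : realType) (u : 'cV[R]_4) : nsqR (Nm R *m u) = 140%:R * nsqR u.
Proof.
rewrite /nsqR !big_ord_recr !big_ord0 /=.
rewrite !mxE !big_ord_recr !big_ord0 /= !mxE /=.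
ring.
Qed.

Definition xB (R : realType) : 'M[R]_4 :=
  \matrix_(i < 4, j < 4) nth 0 (nth [::]
  [:: [:: (1%:R / 25%:R); - (3%:R / 115%:R); (67%:R / (25%:R * 253%:R)); (172%:R / (115%:R * 231%:R))]; [:: 0; - (1%:R / 23%:R); - (1%:R / 46%:R); - (1%:R / 138%:R)]; [:: 0; 0; - (1%:R / 22%:R); (3%:R / 154%:R)]; [:: 0; 0; 0; (1%:R / 21%:R)]] i) j.

Definition yB (R : realType) : 'M[R]_4 :=
  \matrix_(i < 4, j < 4)
    (nth 0%Z (nth [::] [:: [:: 25; 0; 0; 0]; [:: 10; -23; 0; 0];
       [:: -2; -12; -22; 0]; [:: 2; 3; -13; 21]]%Z i) j)%:~R.

Lemma B_fact (R : realType) (i j : 'I_4) :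
  matB R i j = \sum_l xB R i l * yB R j l.
Proof.
case: i => [[|[|[|[|i]]]] hi] //; case: j => [[|[|[|[|j]]]] hj] //;
rewrite !mxE !big_ord_recr !big_ord0 /= !mxE /=; field => //.
Qed.

Lemma xB_le (R : realType) (i : 'I_4) : \sum_l xB R i l ^+ 2 <= 1 / 408%:R.
Proof.
case: i => [[|[|[|[|i]]]] hi] //;
rewrite !big_ord_recr !big_ord0 /= !mxE /=; lra.
Qed.

Lemma yB_le (R : realType) (j : 'I_4) : \sum_l yB R j l ^+ 2 <= 632%:R.
Proof.
case: j => [[|[|[|[|j]]]] hj] //;
rewrite !big_ord_recr !big_ord0 /= !mxE /=; lra.
Qed.

Definition kR (R : realType) : R := (Num.sqrt 140%:R)^-1.
Lemma kR2 (R : realType) : kR R ^+ 2 = 140%:R^-1.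
Proof. by rewrite /kR exprVn sqr_sqrtr // ler0n. Qed.

Definition XR (R : realType) : 'M[R]_4 := kR R *: Nm R.

Lemma XR_orth (R : realType) (u : 'cV[R]_4) : nsqR (XR R *m u) <= nsqR u.
Proof.
rewrite /XR -scalemxAl.
have -> : nsqR (kR R *: (Nm R *m u)) = kR R ^+ 2 * nsqR (Nm R *m u).
  by rewrite /nsqR mulr_sumr; apply: eq_bigr => i _; rewrite mxE exprMn.
by rewrite N_orth kR2 mulrA mulVf ?mul1r ?pnatr_eq0.
Qed.

Definition vR (R : realType) : 'cV[R]_4 :=
  \col_(i < 4) (nth 0%Z [:: -7; 14; -7; 10]%Z i)%:~R.

Lemma vR_n (R : realType) : nsqR (vR R) = 394%:R.
Proof. rewrite /nsqR !big_ord_recr !big_ord0 /= !mxE /=; lra. Qed.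

Lemma A_val (R : realType) :
  nsqR (schur_mul (matA R) (XR R) *m vR R) = kR R ^+ 2 * (20%:R * 4313%:R).
Proof.
rewrite /nsqR /XR !big_ord_recr !big_ord0 /=.
rewrite !mxE !big_ord_recr !big_ord0 /= !mxE /=.
ring.
Qed.

Lemma A_fact (R : realType) (i j : 'I_4) :
  matA R i j = \sum_l matA R i l * (1%:M : 'M[R]_4) j l.
Proof.
case: i => [[|[|[|[|i]]]] hi] //; case: j => [[|[|[|[|j]]]] hj] //;
rewrite !mxE !big_ord_recr !big_ord0 /= !mxE /=; ring.
Qed.

Lemma xA_le (R : realType) (i : 'I_4) : \sum_l matA R i l ^+ 2 <= 3%:R.
Proof.
case: i => [[|[|[|[|i]]]] hi] //;
rewrite !big_ord_recr !big_ord0 /= !mxE /=; lra.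
Qed.

Lemma yA_le (R : realType) (j : 'I_4) : \sum_l (1%:M : 'M[R]_4) j l ^+ 2 <= 1.
Proof.
case: j => [[|[|[|[|j]]]] hj] //;
rewrite !big_ord_recr !big_ord0 /= !mxE /=; lra.
Qed.

Section Gen.
Variables (R : realType) (K : comPzRingType) (emb : {rmorphism R -> K})
  (re im : K -> R) (abs : K -> R).
Hypothesis reD : forall a b, re (a + b) = re a + re b.
Hypothesis imD : forall a b, im (a + b) = im a + im b.
Hypothesis reM : forall r z, re (emb r * z) = r * re z.
Hypothesis imM : forall r z, im (emb r * z) = r * im z.
Hypothesis re_emb : forall r, re (emb r) = r.
Hypothesis im_emb : forall r, im (emb r) = 0.
Hypothesis absM : forall a b, abs (a * b) = abs a * abs b.
Hypothesis absE : forall z, abs z = Num.sqrt (re z ^+ 2 + im z ^+ 2).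

Lemma re0 : re 0 = 0.
Proof. have h := reD 0 0; rewrite addr0 in h; apply: (addrI (re 0)); by rewrite addr0 -h. Qed.
Lemma im0 : im 0 = 0.
Proof. have h := imD 0 0; rewrite addr0 in h; apply: (addrI (im 0)); by rewrite addr0 -h. Qed.

Lemma re_sum (I : Type) (r : seq I) (P : pred I) (F : I -> K) :
  re (\sum_(i <- r | P i) F i) = \sum_(i <- r | P i) re (F i).
Proof. exact: (big_morph re reD re0). Qed.
Lemma im_sum (I : Type) (r : seq I) (P : pred I) (F : I -> K) :
  im (\sum_(i <- r | P i) F i) = \sum_(i <- r | P i) im (F i).
Proof. exact: (big_morph im imD im0). Qed.

Lemma abs_ge0 z : 0 <= abs z. Proof. by rewrite absE sqrtr_ge0. Qed.
Lemma abs2 z : abs z ^+ 2 = re z ^+ 2 + im z ^+ 2.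
Proof. by rewrite absE sqr_sqrtr // addr_ge0 ?sqr_ge0. Qed.

Lemma abs_tri a b : abs (a + b) <= abs a + abs b.
Proof.
have h1 := abs_ge0 a; have h2 := abs_ge0 b.
rewrite -(ler_pXn2r (n := 2)) // ?nnegrE ?addr_ge0 ?abs_ge0 //.
rewrite abs2 reD imD.
have e : (abs a + abs b) ^+ 2 = abs a ^+ 2 + abs b ^+ 2 + 2%:R * (abs a * abs b) by ring.
rewrite e !abs2.
suff : re a * re b + im a * im b <= abs a * abs b.
  move=> h; lra.
have hab : 0 <= abs a * abs b by rewrite mulr_ge0.
have [hn|hp] := ltrP (re a * re b + im a * im b) 0.
  by apply: le_trans hab; apply: ltW.
rewrite -(ler_pXn2r (n := 2)) // ?nnegrE // exprMn !abs2.
have : 0 <= (re a * im b - im a * re b) ^+ 2 by apply: sqr_ge0.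
move=> h; nra.
Qed.

Lemma abs_sum (I : Type) (r : seq I) (P : pred I) (F : I -> K) :
  abs (\sum_(i <- r | P i) F i) <= \sum_(i <- r | P i) abs (F i).
Proof.
apply: (big_rec2 (fun x y => abs y <= x)).
  by rewrite absE re0 im0 expr0n /= addr0 sqrtr0.
move=> i x y _ h; apply: le_trans (abs_tri _ _) _; exact: lerD.
Qed.

Lemma abs_embM r z : abs (emb r * z) = `|r| * abs z.
Proof.
rewrite !absE reM imM -sqrtr_sqr -sqrtrM ?sqr_ge0 //; congr Num.sqrt; ring.
Qed.

Lemma abs0 : abs 0 = 0.
Proof. by rewrite absE re0 im0 expr0n /= addr0 sqrtr0. Qed.


Definition nsq n (v : 'cV[K]_n) := \sum_i abs (v i ord0) ^+ 2.
Lemma vnormE n (v : 'cV[K]_n) : vnorm abs v = Num.sqrt (nsq v). Proof. by []. Qed.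
Lemma nsq_ge0 n (v : 'cV[K]_n) : 0 <= nsq v.
Proof. by apply: sumr_ge0 => i _; apply: sqr_ge0. Qed.
Lemma nsq0 n : nsq (0 : 'cV[K]_n) = 0.
Proof. by rewrite /nsq big1 // => i _; rewrite mxE abs0 expr0n. Qed.
Lemma vnorm0 n : vnorm abs (0 : 'cV[K]_n) = 0.
Proof. by rewrite vnormE nsq0 sqrtr0. Qed.
Lemma nsq_scale n r (v : 'cV[K]_n) : nsq (emb r *: v) = r ^+ 2 * nsq v.
Proof.
by rewrite /nsq mulr_sumr; apply: eq_bigr => i _; rewrite mxE abs_embM exprMn nK.
Qed.
Lemma vnorm_scale n r (v : 'cV[K]_n) : vnorm abs (emb r *: v) = `|r| * vnorm abs v.
Proof. by rewrite !vnormE nsq_scale sqrtrM ?sqr_ge0 // sqrtr_sqr. Qed.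
Lemma single_le n (v : 'cV[K]_n) j : abs (v j ord0) ^+ 2 <= nsq v.
Proof.
rewrite /nsq (bigD1 j) //= lerDl; apply: sumr_ge0 => i _; apply: sqr_ge0.
Qed.

Lemma bounded m n (M : 'M[K]_(m, n)) :
  exists C, 0 <= C /\ forall v, nsq (M *m v) <= C * nsq v.
Proof.
exists (\sum_i (\sum_j abs (M i j)) ^+ 2); split.
  by apply: sumr_ge0 => i _; apply: sqr_ge0.
move=> v; rewrite /nsq mulr_suml; apply: ler_sum => i _; rewrite mxE.
have h1 : abs (\sum_j M i j * v j ord0) <= (\sum_j abs (M i j)) * Num.sqrt (nsq v).
  apply: le_trans (abs_sum _ _ _) _; rewrite mulr_suml; apply: ler_sum => j _.
  rewrite absM; apply: ler_wpM2l; first exact: abs_ge0.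
  rewrite -[X in X <= _](ger0_norm (abs_ge0 _)) -sqrtr_sqr ler_sqrt ?nsq_ge0 //.
  exact: single_le.
have h0 := abs_ge0 (\sum_j M i j * v j ord0).
apply: (@le_trans _ _ (((\sum_j abs (M i j)) * Num.sqrt (nsq v)) ^+ 2)).
  by nra.
by rewrite exprMn sqr_sqrtr ?nsq_ge0.
Qed.

Lemma le_vnorm n m (u : 'cV[K]_n) (v : 'cV[K]_m) c : 0 <= c ->
  nsq u <= c ^+ 2 * nsq v -> vnorm abs u <= c * vnorm abs v.
Proof.
move=> c0 h; rewrite !vnormE -[c in c * _]ger0_norm // -sqrtr_sqr -sqrtrM ?sqr_ge0 //.
by rewrite ler_sqrt // mulr_ge0 ?sqr_ge0 ?nsq_ge0.
Qed.

Lemma opnorm_le_of m n (M : 'M[K]_(m, n)) c : 0 <= c ->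
  (forall v, nsq (M *m v) <= c ^+ 2 * nsq v) -> opnorm abs M <= c.
Proof.
move=> c0 h; apply: ge_sup.
  by exists (vnorm abs (M *m 0)), 0; split => //; rewrite vnorm0.
move=> r [v [hv ->]]; apply: le_trans (le_vnorm c0 (h v)) _.
by rewrite -[c in _ <= c]mulr1; apply: ler_wpM2l.
Qed.

Lemma opnorm_hasub m n (M : 'M[K]_(m, n)) :
  has_ubound [set r : R | exists v : 'cV[K]_n, vnorm abs v <= 1 /\ r = vnorm abs (M *m v)].
Proof.
have [C [C0 hC]] := bounded M.
exists (Num.sqrt C) => r [v [hv ->]].
have h : vnorm abs (M *m v) <= Num.sqrt C * vnorm abs v.
  by apply: le_vnorm; rewrite ?sqrtr_ge0 // sqr_sqrtr.
apply: le_trans h _; rewrite -[X in _ <= X]mulr1; apply: ler_wpM2l => //.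
exact: sqrtr_ge0.
Qed.

Lemma opnorm_ge0 m n (M : 'M[K]_(m, n)) : 0 <= opnorm abs M.
Proof.
apply: (ub_le_sup (opnorm_hasub M)); exists 0; split; rewrite ?mulmx0 vnorm0 //.
Qed.

Lemma opnorm_geP m n (M : 'M[K]_(m, n)) v :
  vnorm abs (M *m v) <= opnorm abs M * vnorm abs v.
Proof.
have [C [C0 hC]] := bounded M.
have [z|nz] := eqVneq (nsq v) 0.
  have h := hC v; rewrite z mulr0 in h.
  have e : nsq (M *m v) = 0 by apply/eqP; rewrite eq_le h nsq_ge0.
  by rewrite !vnormE e z sqrtr0 mulr0.
have sp : 0 < vnorm abs v by rewrite vnormE sqrtr_gt0 lt_def nz nsq_ge0.
set s := vnorm abs v in sp *.
have hw : vnorm abs (M *m (emb s^-1 *: v)) <= opnorm abs M.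
  apply: (ub_le_sup (opnorm_hasub M)); exists (emb s^-1 *: v); split => //.
  rewrite vnorm_scale ger0_norm; last by rewrite invr_ge0 ltW.
  by rewrite /s mulVf // gt_eqF.
rewrite -scalemxAr vnorm_scale ger0_norm in hw; last by rewrite invr_ge0 ltW.
have := ler_wpM2r (ltW sp) hw.
by rewrite mulrAC mulVf ?mul1r // gt_eqF.
Qed.

Lemma schur_fact m n k (Am : 'M[K]_(m, n)) (x : 'M[R]_(m, k)) (y : 'M[R]_(n, k))
  (al be : R) :
  (forall i j, Am i j = \sum_l emb (x i l) * emb (y j l)) ->
  (forall i, \sum_l x i l ^+ 2 <= al) -> (forall j, \sum_l y j l ^+ 2 <= be) ->
  0 <= al ->
  forall X v, nsq (schur_mul Am X *m v) <= al * be * opnorm abs X ^+ 2 * nsq v.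
Proof.
move=> hA hx hy al0 X v.
pose w l := \col_j (emb (y j l) * v j ord0).
pose z l := X *m w l.
have ent : forall i, (schur_mul Am X *m v) i ord0 = \sum_l emb (x i l) * z l i ord0.
  move=> i; rewrite !mxE.
  under eq_bigr do rewrite mxE hA mulr_suml mulr_suml.
  rewrite exchange_big /=; apply: eq_bigr => l _; rewrite /z mxE mulr_sumr.
  by apply: eq_bigr => j _; rewrite /w mxE; ring.
have step1 : forall i, abs ((schur_mul Am X *m v) i ord0) ^+ 2
    <= al * \sum_l abs (z l i ord0) ^+ 2.
  move=> i; rewrite ent.
  have h1 : abs (\sum_l emb (x i l) * z l i ord0)
      <= \sum_l `|x i l| * abs (z l i ord0).
    by apply: le_trans (abs_sum _ _ _) _; apply: ler_sum => l _; rewrite abs_embM.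
  have h2 : (\sum_l `|x i l| * abs (z l i ord0)) ^+ 2 <=
      (\sum_l x i l ^+ 2) * (\sum_l abs (z l i ord0) ^+ 2).
    move: (CS (fun l => `|x i l|) (fun l => abs (z l i ord0))) => /=.
    by congr (_ <= _ * _); apply: eq_bigr => l _; rewrite nK.
  have h0 := abs_ge0 (\sum_l emb (x i l) * z l i ord0).
  have h3 : 0 <= \sum_l abs (z l i ord0) ^+ 2 by apply: sumr_ge0 => l _; apply: sqr_ge0.
  have h4 := hx i.
  set a := abs _ in h0 h1 *; set b := \sum_l _ in h1 h2.
  set S := \sum_l x i l ^+ 2 in h2 h4; set T := \sum_l _ ^+ 2 in h2 h3 *.
  have h5 : a ^+ 2 <= b ^+ 2 by nra.
  have h6 : S * T <= al * T by nra.
  by apply: le_trans h5 (le_trans h2 h6).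
have step2 : forall l, nsq (z l) <= opnorm abs X ^+ 2 * nsq (w l).
  move=> l; have h := opnorm_geP X (w l); rewrite -/(z l) !vnormE in h.
  have h0 := sqrtr_ge0 (nsq (z l)).
  have o0 := opnorm_ge0 X.
  have hh : Num.sqrt (nsq (z l)) ^+ 2 <= (opnorm abs X * Num.sqrt (nsq (w l))) ^+ 2.
    by nra.
  by rewrite exprMn !sqr_sqrtr ?nsq_ge0 in hh.
have step3 : \sum_l nsq (w l) <= be * nsq v.
  rewrite /nsq exchange_big /= mulr_sumr; apply: ler_sum => j _.
  under eq_bigr do rewrite mxE abs_embM exprMn nK.
  by rewrite -mulr_suml; apply: ler_wpM2r; [apply: sqr_ge0 | apply: hy].
rewrite {1}/nsq.
apply: le_trans (ler_sum _ (fun i _ => step1 i)) _.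
rewrite -mulr_sumr exchange_big /=.
have e : \sum_l \sum_i abs (z l i ord0) ^+ 2 = \sum_l nsq (z l) by [].
rewrite e -!mulrA; apply: ler_wpM2l => //.
apply: le_trans (ler_sum _ (fun l _ => step2 l)) _.
rewrite -mulr_sumr.
have -> : be * (opnorm abs X * (opnorm abs X * nsq v)) =
  opnorm abs X ^+ 2 * (be * nsq v) by ring.
by apply: ler_wpM2l; [apply: sqr_ge0 | exact: step3].
Qed.

Lemma schur_elem_le m n k (Am : 'M[K]_(m, n)) (x : 'M[R]_(m, k)) (y : 'M[R]_(n, k))
  (al be : R) :
  (forall i j, Am i j = \sum_l emb (x i l) * emb (y j l)) ->
  (forall i, \sum_l x i l ^+ 2 <= al) -> (forall j, \sum_l y j l ^+ 2 <= be) ->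
  0 <= al -> 0 <= be ->
  forall r, [set r : R | exists X : 'M[K]_(m, n),
         opnorm abs X <= 1 /\ r = opnorm abs (schur_mul Am X)] r -> r <= Num.sqrt (al * be).
Proof.
move=> hA hx hy al0 be0 r [X [hX ->]].
apply: opnorm_le_of; first exact: sqrtr_ge0.
move=> v; rewrite sqr_sqrtr ?mulr_ge0 //.
apply: le_trans (schur_fact hA hx hy al0 X v) _.
rewrite -mulrA; apply: ler_wpM2l; first exact: mulr_ge0.
apply: ler_piMl; first exact: nsq_ge0.
have o0 := opnorm_ge0 X.
by rewrite expr2; apply: mulr_ile1.
Qed.

Lemma schur_norm_le m n k (Am : 'M[K]_(m, n)) (x : 'M[R]_(m, k)) (y : 'M[R]_(n, k))
  (al be : R) :
  (forall i j, Am i j = \sum_l emb (x i l) * emb (y j l)) ->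
  (forall i, \sum_l x i l ^+ 2 <= al) -> (forall j, \sum_l y j l ^+ 2 <= be) ->
  0 <= al -> 0 <= be -> schur_norm abs Am <= Num.sqrt (al * be).
Proof.
move=> hA hx hy al0 be0; apply: ge_sup; last exact: (schur_elem_le hA hx hy al0 be0).
exists (opnorm abs (schur_mul Am 0)), 0; split => //.
apply: opnorm_le_of => // v; rewrite mul0mx nsq0 expr1n mul1r; exact: nsq_ge0.
Qed.

Lemma schur_norm_ge m n k (Am : 'M[K]_(m, n)) (x : 'M[R]_(m, k)) (y : 'M[R]_(n, k))
  (al be : R) :
  (forall i j, Am i j = \sum_l emb (x i l) * emb (y j l)) ->
  (forall i, \sum_l x i l ^+ 2 <= al) -> (forall j, \sum_l y j l ^+ 2 <= be) ->
  0 <= al -> 0 <= be -> forall X v, opnorm abs X <= 1 ->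
  vnorm abs (schur_mul Am X *m v) <= schur_norm abs Am * vnorm abs v.
Proof.
move=> hA hx hy al0 be0 X v hX.
apply: le_trans (opnorm_geP _ v) _; apply: ler_wpM2r; first exact: sqrtr_ge0.
apply: ub_le_sup; first by exists (Num.sqrt (al * be)); exact: (schur_elem_le hA hx hy al0 be0).
by exists X.
Qed.


Lemma abs2_emb r : abs (emb r) ^+ 2 = r ^+ 2.
Proof. by rewrite abs2 re_emb im_emb expr0n /= addr0. Qed.

Lemma nsq_emb n (u : 'cV[R]_n) : nsq (map_mx emb u) = nsqR u.
Proof. by apply: eq_bigr => i _; rewrite mxE abs2_emb. Qed.

Lemma re_mul m n (M : 'M[R]_(m, n)) (v : 'cV[K]_n) i :
  re ((map_mx emb M *m v) i ord0) = (M *m map_mx re v) i ord0.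
Proof.
rewrite !mxE re_sum; apply: eq_bigr => j _; by rewrite !mxE reM.
Qed.
Lemma im_mul m n (M : 'M[R]_(m, n)) (v : 'cV[K]_n) i :
  im ((map_mx emb M *m v) i ord0) = (M *m map_mx im v) i ord0.
Proof.
rewrite !mxE im_sum; apply: eq_bigr => j _; by rewrite !mxE imM.
Qed.

Lemma nsq_split n (v : 'cV[K]_n) : nsq v = nsqR (map_mx re v) + nsqR (map_mx im v).
Proof. by rewrite /nsq /nsqR -big_split; apply: eq_bigr => i _; rewrite abs2 !mxE. Qed.

Lemma opnorm_real_le1 n (M : 'M[R]_(n, n)) :
  (forall u, nsqR (M *m u) <= nsqR u) -> opnorm abs (map_mx emb M) <= 1.
Proof.
move=> h; apply: opnorm_le_of => // v.
rewrite expr1n mul1r !nsq_split.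
have -> : map_mx re (map_mx emb M *m v) = M *m map_mx re v.
  by apply/matrixP => i j; rewrite ord1 mxE re_mul.
have -> : map_mx im (map_mx emb M *m v) = M *m map_mx im v.
  by apply/matrixP => i j; rewrite ord1 mxE im_mul.
by apply: lerD.
Qed.

Theorem main_gen : schur_norm abs (matB K) < schur_norm abs (matA K).
Proof.
have embA : forall i j, matA K i j = emb (matA R i j).
  by move=> i j; rewrite !mxE rmorph_nat.
have embB : forall i j, matB K i j = emb (matB R i j).
  by move=> i j; rewrite !mxE rmorph_nat.
have hA : forall i j, matA K i j =
    \sum_l emb (matA R i l) * emb ((1%:M : 'M[R]_4) j l).
  move=> i j; rewrite embA A_fact rmorph_sum; apply: eq_bigr => l _; exact: rmorphM.
have hB : forall i j, matB K i j = \sum_l emb (xB R i l) * emb (yB R j l).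
  move=> i j; rewrite embB B_fact rmorph_sum; apply: eq_bigr => l _; exact: rmorphM.
have sB := schur_norm_le hB (@xB_le R) (@yB_le R) (ltW _) (ler0n _ 632).
have hX : opnorm abs (map_mx emb (XR R)) <= 1 := opnorm_real_le1 (@XR_orth R).
have h := schur_norm_ge hA (@xA_le R) (@yA_le R) (ler0n _ 3) ler01
  (map_mx emb (vR R)) hX.
have e : schur_mul (matA K) (map_mx emb (XR R)) *m map_mx emb (vR R) =
    map_mx emb (schur_mul (matA R) (XR R) *m vR R).
  rewrite map_mxM; congr (_ *m _); apply/matrixP => i j.
  by rewrite !mxE !rmorphM rmorph_nat.
rewrite e !vnormE !nsq_emb A_val vR_n kR2 in h.
apply: (le_lt_trans (sB _)); first by rewrite divr_gt0 ?ltr0n.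
rewrite ltNge; apply/negP => hle.
have := le_trans h (ler_wpM2r (sqrtr_ge0 _) hle).
rewrite -sqrtrM; last by rewrite mulr_ge0 ?divr_ge0 ?ler0n.
rewrite ler_sqrt; last by lra.
lra.
Qed.

End Gen.

Lemma reals_inst (R : realType) :
  schur_norm (fun x : R => `|x|) (matA R) > schur_norm (fun x : R => `|x|) (matB R).
Proof.
apply: (@main_gen R R (idfun : {rmorphism R -> R}) id (fun _ => 0) (fun x : R => `|x|)) => //.
- by move=> a b; rewrite addr0.
- by move=> r z; rewrite mulr0.
- by move=> a b; rewrite normrM.
- by move=> z; rewrite expr0n /= addr0 sqrtr_sqr.
Qed.

Lemma complex_inst (R : realType) :
  schur_norm (@Normc.normc R) (matA R[i]) > schur_norm (@Normc.normc R) (matB R[i]).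
Proof.
pose e : {rmorphism R -> R[i]} := real_complex R.
apply: (@main_gen R R[i] e (@complex.Re R) (@complex.Im R) (@Normc.normc R)).
- by case=> a b [c d].
- by case=> a b [c d].
- by move=> r [a b] /=; ring.
- by move=> r [a b] /=; ring.
- by [].
- by [].
- exact: Normc.normcM.
- by case.
Qed.

Theorem proposition5p7 (R : realType) :
  schur_norm (fun x : R => `|x|) (matA R) > schur_norm (fun x : R => `|x|) (matB R)
  /\
  schur_norm (@Normc.normc R) (matA R[i]) > schur_norm (@Normc.normc R) (matB R[i]).
Proof. by split; [apply: reals_inst | apply: complex_inst]. Qed.
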